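(* Let a group $G$ act on a set $U$, and let $\mathcal{F}$ be a $G$-invariant family of finite subsets of $U$ whose cardinalities are uniformly bounded, i.e. $\max_{F\in\mathcal{F}}|F|<\infty$. Let $X\subseteq U$ be a finite system of representatives for $\mathcal{F}$, i.e. $X\cap F\neq\emptyset$ for every $F\in\mathcal{F}$. Then there exists a $G$-invariant system of representatives $Y\subseteq U$ for $\mathcal{F}$ (i.e. $gY=Y$ for all $g\in G$ and $Y\cap F\neq\emptyset$ for all $F\in\mathcal{F}$) such that $|Y|\le |X|\cdot\max_{F\in\mathcal{F}}|F|$.
   Context: A family $\mathcal{F}$ here is an unordered family, i.e. a set of subsets of $U$. It is $G$-invariant if $gF=\{gf\mid f\in F\}\in\mathcal{F}$ for all $g\in G$ and $F\in\mathcal{F}$. *)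

(* Defs.v *)
From Stdlib Require Import List Arith.
Import ListNotations.

Definition subset (U : Type) := U -> Prop.

Definition has_card {U : Type} (A : subset U) (n : nat) : Prop :=
  exists l : list U, NoDup l /\ length l = n /\ (forall x, A x <-> In x l).

Definition is_group {G : Type} (mul : G -> G -> G) (one : G) (inv : G -> G) : Prop :=
  (forall a b c, mul a (mul b c) = mul (mul a b) c) /\
  (forall a, mul one a = a) /\ (forall a, mul a one = a) /\
  (forall a, mul (inv a) a = one) /\ (forall a, mul a (inv a) = one).

Definition is_action {G U : Type} (mul : G -> G -> G) (one : G)
  (act : G -> U -> U) : Prop :=
  (forall x, act one x = x) /\
  (forall g h x, act (mul g h) x = act g (act h x)).

Definition img {G U : Type} (act : G -> U -> U) (g : G) (A : subset U) : subset U :=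
  fun u => exists a, A a /\ u = act g a.

Definition same_set {U : Type} (A B : subset U) : Prop := forall u, A u <-> B u.

Definition family_invariant {G U : Type} (act : G -> U -> U)
  (Fam : subset U -> Prop) : Prop :=
  forall g F, Fam F -> exists F', Fam F' /\ same_set F' (img act g F).

Definition set_invariant {G U : Type} (act : G -> U -> U) (Y : subset U) : Prop :=
  forall g, same_set (img act g Y) Y.

Definition represents {U : Type} (Y : subset U) (Fam : subset U -> Prop) : Prop :=
  forall F, Fam F -> exists u, Y u /\ F u.

(* Main.v *)
Require Import Defs.
From Stdlib Require Import List Arith Lia Classical ClassicalEpsilon.
Import ListNotations.

Definition dec (P : Prop) : bool := if excluded_middle_informative P then true else false.
Lemma decP (P : Prop) : dec P = true <-> P.
Proof. unfold dec; destruct (excluded_middle_informative P); split; intuition discriminate. Qed.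
Lemma decF (P : Prop) : dec P = false <-> ~ P.
Proof. unfold dec; destruct (excluded_middle_informative P); split; intuition discriminate. Qed.

Lemma decT {P : Prop} : dec P = true -> P.
Proof. apply decP. Qed.
Lemma decFF {P : Prop} : dec P = false -> ~ P.
Proof. apply decF. Qed.
Lemma decI {P : Prop} : P -> dec P = true.
Proof. apply decP. Qed.
Lemma decIF {P : Prop} : ~ P -> dec P = false.
Proof. apply decF. Qed.

Definition edec {A : Type} : forall x y : A, {x = y} + {x <> y} :=
  fun x y => excluded_middle_informative (x = y).

Fixpoint sumL {B : Type} (f : B -> nat) (l : list B) : nat :=
  match l with [] => 0 | b :: l' => f b + sumL f l' end.

Fixpoint sumN (f : nat -> nat) (n : nat) : nat :=
  match n with 0 => 0 | S n' => sumN f n' + f n' end.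

Lemma sumL_ext {B} (f g : B -> nat) l : (forall b, In b l -> f b = g b) -> sumL f l = sumL g l.
Proof. induction l; simpl; intros H; auto. Qed.

Lemma sumL_const {B} (f : B -> nat) l c : (forall b, In b l -> f b = c) -> sumL f l = length l * c.
Proof. induction l; simpl; intros H; auto. Qed.

Lemma partition_len {A B : Type} (pi : A -> B) (O : list B) : NoDup O ->
  forall l : list A, (forall t, In t l -> In (pi t) O) ->
  length l = sumL (fun b => length (filter (fun t => dec (pi t = b)) l)) O.
Proof.
  induction 1 as [|b O' Hb HO IH]; intros l Hl.
  - destruct l as [|t l]; auto. exfalso; apply (Hl t); simpl; auto.
  - simpl. rewrite <- (filter_length (fun t => dec (pi t = b)) l).
    f_equal.
    rewrite (IH (filter (fun x => negb (dec (pi x = b))) l)).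
    + apply sumL_ext. intros b' Hb'.
      clear IH Hl. induction l as [|t l IHl]; simpl; auto.
      destruct (dec (pi t = b)) eqn:E; simpl.
      * apply decT in E. destruct (dec (pi t = b')) eqn:E'; simpl; auto.
        apply decT in E'. exfalso; apply Hb. rewrite <- E, E'. exact Hb'.
      * destruct (dec (pi t = b')); simpl; auto.
    + intros t Ht. apply filter_In in Ht as [Ht Hn].
      destruct (Hl t Ht) as [E|E]; auto.
      exfalso. destruct (dec (pi t = b)) eqn:E2; simpl in Hn; try discriminate.
      apply decFF in E2; auto.
Qed.

Lemma union_bound {A : Type} (p : nat -> A -> bool) K (l : list A) :
  (forall t, In t l -> exists i, i < K /\ p i t = true) ->
  length l <= sumN (fun i => length (filter (p i) l)) K.
Proof.
  induction l as [|t l IH]; simpl; intros H. lia.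
  assert (Hs : forall K', sumN (fun i => length (if p i t then t :: filter (p i) l else filter (p i) l)) K'
     = sumN (fun i => if p i t then 1 else 0) K' + sumN (fun i => length (filter (p i) l)) K').
  { induction K'; simpl; auto. rewrite IHK'. destruct (p K' t); simpl; lia. }
  rewrite Hs.
  assert (H1 : forall K', (exists i, i < K' /\ p i t = true) -> 1 <= sumN (fun i => if p i t then 1 else 0) K').
  { induction K'; intros [i [Hi Hp]]. lia. simpl.
    destruct (Nat.eq_dec i K'). subst. rewrite Hp. lia.
    assert (1 <= sumN (fun i => if p i t then 1 else 0) K') by (apply IHK'; exists i; split; auto; lia). lia. }
  specialize (H1 K (H t (or_introl eq_refl))).
  specialize (IH (fun t' Ht' => H t' (or_intror Ht'))). lia.
Qed.

Lemma sumN_lt (f : nat -> nat) K c : 1 <= K -> (forall i, i < K -> f i < c) -> sumN f K < K * c.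
Proof.
  induction K; intros HK H. lia. simpl.
  destruct K. simpl. specialize (H 0). lia.
  assert (sumN f (S K) < S K * c) by (apply IHK; [lia| intros; apply H; lia]).
  specialize (H (S K)). nia.
Qed.

Lemma sumN_mul k f K : k * sumN f K = sumN (fun i => k * f i) K.
Proof. induction K; simpl; lia. Qed.

Lemma finite_choice {A B : Type} (R : A -> B -> Prop) (Q : list A) :
  exists T : list B, forall q, In q Q -> (exists b, R q b) -> exists b, In b T /\ R q b.
Proof.
  induction Q as [|q Q [T HT]]. exists []; simpl; tauto.
  destruct (classic (exists b, R q b)) as [[b Hb]|Hn].
  - exists (b :: T). intros q' [<-|Hq'] Hex. exists b; simpl; auto.
    destruct (HT q' Hq' Hex) as [b' [? ?]]. exists b'; simpl; auto.
  - exists T. intros q' [<-|Hq'] Hex. contradiction. auto.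
Qed.

Lemma NoDup_map_inj {A B} (f : A -> B) l : (forall x y, f x = f y -> x = y) -> NoDup l -> NoDup (map f l).
Proof.
  intros Hf; induction 1; simpl; constructor; auto.
  intros Hin. apply in_map_iff in Hin as [y [Hy Hy']]. apply Hf in Hy; subst; auto.
Qed.

Lemma filter_len_le {A} (f : A -> bool) l : length (filter f l) <= length l.
Proof. pose proof (filter_length f l). lia. Qed.

Lemma neumann {G U : Type} (mul : G -> G -> G) (inv : G -> G) (act : G -> U -> U)
  (HM : forall g h x, act (mul g h) x = act g (act h x))
  (HL : forall g x, act (inv g) (act g x) = x)
  (HR : forall g x, act g (act (inv g) x) = x)
  (S : G -> Prop) (e0 : G) (Se : S e0)
  (Smul : forall g h, S g -> S h -> S (mul g h)) (Sinv : forall g, S g -> S (inv g)) :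
  forall A : list U, (forall a, In a A -> forall L : list U, exists g, S g /\ ~ In (act g a) L) ->
  forall B : list U, exists g, S g /\ forall a, In a A -> ~ In (act g a) B.
Proof.
  induction A as [|a A IH]; intros HA B.
  { exists e0; simpl; tauto. }
  destruct (classic (exists g, S g /\ forall a0, In a0 (a :: A) -> ~ In (act g a0) B)) as [Hg|Hno]; auto.
  exfalso.
  assert (Hcov : forall g, S g -> exists a0, In a0 (a :: A) /\ In (act g a0) B).
  { intros g Sg. apply NNPP; intros Hn. apply Hno. exists g; split; auto.
    intros a0 Ha0 Hin. apply Hn; eauto. }
  destruct (HA a (or_introl eq_refl) B) as [y [Sy Hy]].
  destruct (finite_choice (fun b x => S x /\ act x a = b) B) as [Xl HXl].
  set (B' := B ++ flat_map (fun x => map (act (mul x (inv y))) B) Xl).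
  destruct (IH (fun a' Ha' => HA a' (or_intror Ha')) B') as [g [Sg Hg]].
  assert (HB' : forall u, In u B -> In u B') by (intros; unfold B'; apply in_or_app; auto).
  destruct (classic (In (act g a) B)) as [Hin|Hnin].
  - destruct (HXl _ Hin (ex_intro _ g (conj Sg eq_refl))) as [x [Hx [Sx Hxa]]].
    set (h := mul y (mul (inv x) g)).
    assert (Sh : S h) by (unfold h; auto).
    destruct (Hcov h Sh) as [a0 [[<-|Ha0] Hb]].
    + apply Hy. unfold h in Hb. rewrite HM, HM, <- Hxa, HL in Hb. exact Hb.
    + apply (Hg a0 Ha0). unfold B'. apply in_or_app; right.
      apply in_flat_map. exists x; split; auto. apply in_map_iff.
      exists (act h a0); split; auto.
      unfold h. rewrite !HM, HL, HR. reflexivity.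
  - destruct (Hcov g Sg) as [a0 [[<-|Ha0] Hb]]. contradiction.
    apply (Hg a0 Ha0); auto.
Qed.

Definition fin_orb {G U : Type} (act : G -> U -> U) (a : U) : Prop :=
  exists L : list U, forall g, In (act g a) L.

Lemma T_exists {G U : Type} (act : G -> U -> U) (e0 : G) (P : list U) :
  (forall p, In p P -> fin_orb act p) ->
  exists T : list G, forall g, exists t, In t T /\ forall p, In p P -> act t p = act g p.
Proof.
  induction P as [|p P IH]; intros HP.
  { exists [e0]; intros g; exists e0; simpl; tauto. }
  destruct IH as [T' HT']. intros; apply HP; simpl; auto.
  destruct (HP p (or_introl eq_refl)) as [L HL].
  destruct (finite_choice (fun (q : G * U) t => act t p = snd q /\ forall p', In p' P -> act t p' = act (fst q) p')
     (list_prod T' L)) as [T HT].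
  exists T. intros g.
  destruct (HT' g) as [t' [Ht' Ht'g]].
  destruct (HT (t', act g p) (in_prod _ _ _ _ Ht' (HL g))) as [t [Ht [Htp HtP]]].
  { exists g; split; auto. simpl. intros; rewrite Ht'g; auto. }
  exists t; split; auto. intros p0 [<-|Hp0]; auto. simpl in HtP. rewrite HtP; auto.
Qed.

Lemma step1 {G U : Type} (mul : G -> G -> G) (inv : G -> G) (one : G) (act : G -> U -> U)
  (HM : forall g h x, act (mul g h) x = act g (act h x))
  (HL : forall g x, act (inv g) (act g x) = x)
  (HR : forall g x, act g (act (inv g) x) = x)
  (H1 : forall x, act one x = x)
  (Fam : subset U -> Prop) (Hinv : family_invariant act Fam)
  (Hfin : forall F, Fam F -> exists l, forall x, F x <-> In x l)
  (X : subset U) (lX : list U) (HX : forall x, X x <-> In x lX) (Hrep : represents X Fam) :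
  forall F, Fam F -> exists f, F f /\ fin_orb act f /\ X f.
Proof.
  intros F HF. apply NNPP; intros Hno.
  destruct (Hfin F HF) as [lF HlF].
  set (P := filter (fun p => dec (fin_orb act p)) lF).
  set (A := filter (fun p => negb (dec (fin_orb act p))) lF).
  set (S := fun g => forall p, In p P -> act g p = p).
  destruct (T_exists act one P) as [T HT].
  { intros p Hp. apply filter_In in Hp as [_ Hp]. apply decT in Hp; auto. }
  assert (HA : forall a, In a A -> forall L, exists g, S g /\ ~ In (act g a) L).
  { intros a Ha L. apply NNPP; intros Hn.
    apply filter_In in Ha as [_ Ha].
    destruct (dec (fin_orb act a)) eqn:E; try discriminate. apply decFF in E. apply E.
    exists (flat_map (fun t => map (act t) L) T). intros g.
    destruct (HT g) as [t [Ht Htg]].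
    assert (Sh : S (mul (inv t) g)).
    { intros p Hp. rewrite HM, <- Htg, HL; auto. }
    assert (Hin : In (act (mul (inv t) g) a) L).
    { apply NNPP; intros Hn'. apply Hn. exists (mul (inv t) g); auto. }
    apply in_flat_map. exists t; split; auto. apply in_map_iff.
    exists (act (mul (inv t) g) a); split; auto. rewrite HM, HR; auto. }
  destruct (neumann mul inv act HM HL HR S one) with (A := A) (B := lX) as [g [Sg Hg]]; auto.
  { intros p _; auto. }
  { intros g h Sg Sh p Hp. rewrite HM, Sh, Sg; auto. }
  { intros g Sg p Hp. rewrite <- (Sg p Hp) at 1. rewrite HL; auto. }
  destruct (Hinv g F HF) as [F' [HF' HF'e]].
  destruct (Hrep F' HF') as [u [Xu F'u]].
  apply HF'e in F'u as [f [Ff ->]].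
  assert (Hf : In f lF) by (apply HlF; auto).
  destruct (dec (fin_orb act f)) eqn:E.
  - apply Hno. exists f. apply decT in E. rewrite (Sg f) in Xu; auto.
    unfold P. apply filter_In. split; auto. apply decI; auto.
  - apply (Hg f). unfold A. apply filter_In. rewrite E; auto. apply HX; auto.
Qed.

Definition good {G U : Type} (act : G -> U -> U) (X : subset U) (m : nat) (u : U) : Prop :=
  exists O : list U, NoDup O /\ (forall v, In v O <-> exists g, v = act g u) /\
    length O <= m * length (filter (fun v => dec (X v)) O).

Lemma nth_map_act {A B} (f : A -> B) (l : list A) i (d : A) (d' : B) :
  i < length l -> nth i (map f l) d' = f (nth i l d).
Proof.
  intros Hi. rewrite (nth_indep _ _ (f d)). apply map_nth. rewrite length_map; auto.
Qed.

Lemma filter_filter_eq {A B} (pi : A -> B) (X : B -> Prop) b l : X b ->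
  filter (fun t => dec (pi t = b)) (filter (fun t => dec (X (pi t))) l) =
  filter (fun t => dec (pi t = b)) l.
Proof.
  intros Xb. induction l as [|t l IH]; simpl; auto.
  destruct (dec (X (pi t))) eqn:E; simpl.
  - destruct (dec (pi t = b)); rewrite IH; auto.
  - destruct (dec (pi t = b)) eqn:E2; rewrite IH; auto.
    apply decT in E2. apply decFF in E. subst; contradiction.
Qed.

Lemma step2 {G U : Type} (mul : G -> G -> G) (inv : G -> G) (one : G) (act : G -> U -> U)
  (HM : forall g h x, act (mul g h) x = act g (act h x))
  (HL : forall g x, act (inv g) (act g x) = x)
  (HR : forall g x, act g (act (inv g) x) = x)
  (H1 : forall x, act one x = x)
  (Fam : subset U -> Prop) (Hinv : family_invariant act Fam) (m : nat)
  (Hbound : forall F, Fam F -> exists k, has_card F k /\ k <= m)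
  (X : subset U) (lX : list U) (HX : forall x, X x <-> In x lX) (Hrep : represents X Fam) :
  forall F, Fam F -> exists f, F f /\ good act X m f.
Proof.
  assert (Hfin : forall F, Fam F -> exists l, forall x, F x <-> In x l).
  { intros F HF. destruct (Hbound F HF) as [k [[l [_ [_ Hl]]] _]]. eauto. }
  pose proof (step1 mul inv one act HM HL HR H1 Fam Hinv Hfin X lX HX Hrep) as S1.
  intros F HF.
  destruct (S1 F HF) as [f0 _].
  destruct (Hbound F HF) as [k [[lF [NDF [lenF HlF]]] Hkm]].
  set (P := filter (fun p => dec (fin_orb act p)) lF).
  destruct (T_exists act one P) as [T HT].
  { intros p Hp. apply filter_In in Hp as [_ Hp]. apply decT in Hp; auto. }
  set (Tup := nodup edec (map (fun t => map (act t) P) T)).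
  assert (HTup : forall tau, In tau Tup <-> exists g, tau = map (act g) P).
  { intros tau; unfold Tup; rewrite nodup_In, in_map_iff; split.
    - intros [t [<- _]]; eauto.
    - intros [g ->]. destruct (HT g) as [t [Ht Htg]]. exists t; split; auto.
      apply map_ext_in; auto. }
  assert (NDT : NoDup Tup) by apply NoDup_nodup.
  assert (HPT : In P Tup).
  { apply HTup. exists one. rewrite <- (map_id P) at 1. apply map_ext_in; auto. }
  assert (Hlen : forall tau, In tau Tup -> length tau = length P).
  { intros tau Ht. apply HTup in Ht as [g ->]. apply length_map. }
  set (pi := fun i (tau : list U) => nth i tau f0).
  assert (Hcover : forall tau, In tau Tup -> exists i, i < length P /\ dec (X (pi i tau)) = true).
  { intros tau Ht. apply HTup in Ht as [g ->].
    destruct (Hinv g F HF) as [F' [HF' HF'e]].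
    destruct (S1 F' HF') as [f' [F'f' [Finf' Xf']]].
    apply HF'e in F'f' as [f [Ff ->]].
    assert (Hfin_f : fin_orb act f).
    { destruct Finf' as [L HLf]. exists L. intros h.
      specialize (HLf (mul h (inv g))). rewrite HM, HL in HLf. auto. }
    assert (HfP : In f P).
    { apply filter_In; split. apply HlF; auto. apply decI; auto. }
    destruct (In_nth P f f0 HfP) as [i [Hi Hnth]].
    exists i; split; auto. apply decI. unfold pi. rewrite (nth_map_act _ _ _ f0); auto.
    rewrite Hnth; auto. }
  set (O := fun i => nodup edec (map (pi i) Tup)).
  set (fib := fun i b => length (filter (fun tau => dec (pi i tau = b)) Tup)).
  assert (HO : forall i, i < length P -> forall v, In v (O i) <-> exists g, v = act g (nth i P f0)).
  { intros i Hi v. unfold O. rewrite nodup_In, in_map_iff. split.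
    - intros [tau [<- Ht]]. apply HTup in Ht as [g ->]. exists g. unfold pi.
      apply nth_map_act; auto.
    - intros [g ->]. exists (map (act g) P). split.
      + unfold pi. apply nth_map_act; auto.
      + apply HTup; eauto. }
  assert (Hfib_le : forall i, i < length P -> forall h b, fib i b <= fib i (act h b)).
  { intros i Hi h b. unfold fib.
    rewrite <- (length_map (map (act h)) (filter (fun tau => dec (pi i tau = b)) Tup)).
    apply NoDup_incl_length.
    - apply NoDup_map_inj. 2: apply NoDup_filter; auto.
      intros x y Hxy. apply (f_equal (map (act (inv h)))) in Hxy.
      rewrite !map_map in Hxy.
      rewrite (map_ext_in _ (fun z => z)), (map_ext_in _ (fun z => z) y), !map_id in Hxy; auto.
    - intros tau' Htau'. apply in_map_iff in Htau' as [tau [<- Htau]].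
      apply filter_In in Htau as [Ht Hpt]. apply decT in Hpt.
      apply filter_In. split.
      + apply HTup in Ht as [g ->]. apply HTup. exists (mul h g).
        rewrite map_map. apply map_ext_in; intros; rewrite HM; auto.
      + apply decI. unfold pi in *. rewrite (nth_map_act _ _ _ f0). rewrite Hpt; auto.
        rewrite Hlen; auto. }
  assert (Hfib : forall i, i < length P -> forall b, In b (O i) -> fib i b = fib i (nth i P f0)).
  { intros i Hi b Hb. apply (HO i Hi) in Hb as [g ->].
    apply Nat.le_antisymm.
    - rewrite <- (HL g (nth i P f0)) at 2. apply Hfib_le; auto.
    - apply Hfib_le; auto. }
  assert (Hc : forall i, i < length P -> 1 <= fib i (nth i P f0)).
  { intros i Hi. unfold fib.
    assert (Hin : In P (filter (fun tau => dec (pi i tau = nth i P f0)) Tup)).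
    { apply filter_In; split; auto. apply decI; auto. }
    destruct (filter _ Tup); simpl in *; [contradiction | lia]. }
  assert (Heq1 : forall i, i < length P -> length Tup = length (O i) * fib i (nth i P f0)).
  { intros i Hi. rewrite (partition_len (pi i) (O i)).
    - apply sumL_const. intros b Hb. apply Hfib; auto.
    - apply NoDup_nodup.
    - intros t Ht. unfold O. apply nodup_In. apply in_map; auto. }
  assert (Heq2 : forall i, i < length P ->
     length (filter (fun tau => dec (X (pi i tau))) Tup) =
     length (filter (fun v => dec (X v)) (O i)) * fib i (nth i P f0)).
  { intros i Hi. rewrite (partition_len (pi i) (filter (fun v => dec (X v)) (O i))).
    - apply sumL_const. intros b Hb. apply filter_In in Hb as [Hb Xb]. apply decT in Xb.
      rewrite filter_filter_eq; auto. apply Hfib; auto.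
    - apply NoDup_filter, NoDup_nodup.
    - intros t Ht. apply filter_In in Ht as [Ht Xt]. apply filter_In; split; auto.
      unfold O. apply nodup_In. apply in_map; auto. }
  destruct (classic (exists i, i < length P /\
      length (O i) <= k * length (filter (fun v => dec (X v)) (O i)))) as [[i [Hi Hgood]]|Hno].
  - exists (nth i P f0). split.
    + apply HlF. assert (Hn : In (nth i P f0) P) by (apply nth_In; auto).
      apply filter_In in Hn; tauto.
    + exists (O i). split; [apply NoDup_nodup|]. split; [apply HO; auto|].
      eapply Nat.le_trans; [exact Hgood|]. apply Nat.mul_le_mono_r; auto.
  - exfalso.
    set (a := fun i => length (filter (fun tau => dec (X (pi i tau))) Tup)).
    assert (Hlt : forall i, i < length P -> k * a i < length Tup).
    { intros i Hi. unfold a. rewrite Heq2, (Heq1 i Hi); auto.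
      assert (~ length (O i) <= k * length (filter (fun v => dec (X v)) (O i))) by eauto.
      specialize (Hc i Hi). nia. }
    assert (HU : length Tup <= sumN a (length P)).
    { apply union_bound. auto. }
    assert (HK : 1 <= length P).
    { destruct (Hcover P HPT) as [i [Hi _]]. lia. }
    pose proof (sumN_lt (fun i => k * a i) (length P) (length Tup) HK Hlt) as Hs.
    rewrite <- sumN_mul in Hs.
    assert (HPk : length P <= k) by (rewrite <- lenF; apply filter_len_le).
    assert (k * length Tup <= k * sumN a (length P)) by (apply Nat.mul_le_mono_l; auto).
    assert (length P * length Tup <= k * length Tup) by (apply Nat.mul_le_mono_r; auto).
    lia.
Qed.

Lemma good_orb {G U : Type} (mul : G -> G -> G) (inv : G -> G) (act : G -> U -> U)
  (HM : forall g h x, act (mul g h) x = act g (act h x))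
  (HL : forall g x, act (inv g) (act g x) = x)
  (X : subset U) (m : nat) u g : good act X m u -> good act X m (act g u).
Proof.
  intros [O [ND [HO Hl]]]. exists O; split; auto; split; auto.
  intros v; rewrite HO; split.
  - intros [h ->]. exists (mul h (inv g)). rewrite HM, HL; auto.
  - intros [h ->]. exists (mul h g). rewrite HM; auto.
Qed.

Lemma card_good {G U : Type} (mul : G -> G -> G) (inv : G -> G) (one : G) (act : G -> U -> U)
  (HM : forall g h x, act (mul g h) x = act g (act h x))
  (HL : forall g x, act (inv g) (act g x) = x)
  (H1 : forall x, act one x = x)
  (X : subset U) (m : nat) :
  forall n0 (L : list U), length L <= n0 -> NoDup L -> (forall v, In v L -> X v) ->
  (forall v w, In v L -> X w -> (exists g, w = act g v) -> In w L) ->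
  exists lY, NoDup lY /\ (forall u, (good act X m u /\ exists v, In v L /\ exists g, u = act g v) <-> In u lY)
    /\ length lY <= m * length L.
Proof.
  assert (Hsym : forall v w, (exists g, w = act g v) -> exists g, v = act g w).
  { intros v w [g ->]. exists (inv g). rewrite HL; auto. }
  assert (Htr : forall u v w, (exists g, v = act g u) -> (exists g, w = act g v) -> exists g, w = act g u).
  { intros u v w [g ->] [h ->]. exists (mul h g). rewrite HM; auto. }
  induction n0 as [|n0 IH]; intros L HLn ND HLX Hcl.
  - destruct L; simpl in HLn; try lia. exists []. simpl. split; [constructor|]. split; [|lia].
    intros u; split; [intros [_ [v [[] _]]] | intros []].
  - destruct L as [|x L'] eqn:EL.
    { exists []. simpl. split; [constructor|]. split; [|lia].
      intros u; split; [intros [_ [v [[] _]]] | intros []]. }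
    rewrite <- EL in *.
    assert (HxL : In x L) by (rewrite EL; simpl; auto).
    set (Lx := filter (fun v => dec (exists g, v = act g x)) L).
    set (R := filter (fun v => negb (dec (exists g, v = act g x))) L).
    assert (HxLx : In x Lx).
    { apply filter_In; split; auto. apply decI. exists one; auto. }
    assert (HlenL : length Lx + length R = length L) by apply filter_length.
    assert (HLx1 : 1 <= length Lx) by (destruct Lx; simpl in *; [contradiction|lia]).
    assert (HR : forall v, In v R <-> In v L /\ ~ exists g, v = act g x).
    { intros v. unfold R. rewrite filter_In. split.
      - intros [Hv Hd]. split; auto. destruct (dec _) eqn:E; try discriminate. apply decFF; auto.
      - intros [Hv Hd]. split; auto. rewrite decIF; auto. }
    destruct (IH R) as [lYR [NDR [HYR HlR]]].
    { lia. }
    { apply NoDup_filter; auto. }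
    { intros v Hv. apply HR in Hv. apply HLX; tauto. }
    { intros v w Hv Xw Hvw. apply HR in Hv as [Hv Hnv]. apply HR. split; [eauto|].
      intros Hxw. apply Hnv. eauto. }
    destruct (classic (good act X m x)) as [Gx|NGx].
    + destruct Gx as [O [NDO [HOx HlO]]].
      exists (O ++ lYR). split; [|split].
      * apply NoDup_app; auto. intros u HuO HuR.
        apply HYR in HuR as [_ [v [Hv Hvu]]]. apply HR in Hv as [_ Hn]. apply Hn.
        apply HOx in HuO. eauto.
      * intros u. rewrite in_app_iff. split.
        -- intros [Gu [v [Hv Hvu]]].
           destruct (classic (exists g, v = act g x)) as [Hxv|Hxv].
           ++ left. apply HOx. eauto.
           ++ right. apply HYR. split; auto. exists v; split; auto. apply HR; auto.
        -- intros [HuO|HuR].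
           ++ pose proof HuO as Hu. apply HOx in Hu as [g ->]. split.
              ** apply good_orb with (mul := mul) (inv := inv); auto. exists O; auto.
              ** exists x; split; eauto.
           ++ apply HYR in HuR as [Gu [v [Hv Hvu]]]. split; auto. exists v; split; auto.
              apply HR in Hv; tauto.
      * rewrite length_app.
        assert (Hfx : length (filter (fun v => dec (X v)) O) = length Lx).
        { apply Nat.le_antisymm; apply NoDup_incl_length.
          - apply NoDup_filter; auto.
          - intros w Hw. apply filter_In in Hw as [Hw Xw]. apply decT in Xw.
            apply HOx in Hw. apply filter_In. split; [|apply decI; auto]. eauto.
          - apply NoDup_filter; auto.
          - intros w Hw. apply filter_In in Hw as [Hw Hxw]. apply decT in Hxw.
            apply filter_In. split; [apply HOx; auto|]. apply decI; auto. }
        rewrite Hfx in HlO. rewrite <- HlenL, Nat.mul_add_distr_l. lia.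
    + exists lYR. split; auto. split.
      * intros u. rewrite <- HYR. split.
        -- intros [Gu [v [Hv Hvu]]]. split; auto. exists v; split; auto. apply HR; split; auto.
           intros Hxv. apply NGx. destruct (Htr x v u Hxv Hvu) as [g ->].
           rewrite <- (HL g x). apply good_orb with (mul := mul) (inv := inv); auto.
        -- intros [Gu [v [Hv Hvu]]]. split; auto. exists v; split; auto. apply HR in Hv; tauto.
      * assert (m * length R <= m * length L) by (apply Nat.mul_le_mono_l; lia). lia.
Qed.

Theorem mainTheorem1
  (G U : Type) (mul : G -> G -> G) (one : G) (inv : G -> G)
  (act : G -> U -> U)
  (Hgrp : is_group mul one inv) (Hact : is_action mul one act)
  (Fam : subset U -> Prop) (m : nat)
  (Hinv : family_invariant act Fam)
  (Hbound : forall F, Fam F -> exists k, has_card F k /\ k <= m)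
  (X : subset U) (n : nat) (HX : has_card X n) (Hrep : represents X Fam) :
  exists Y : subset U,
    set_invariant act Y /\ represents Y Fam /\
    exists k, has_card Y k /\ k <= n * m.
Proof.
  destruct Hgrp as [GA [G1l [G1r [GVl GVr]]]].
  destruct Hact as [H1 HM].
  assert (HL : forall g x, act (inv g) (act g x) = x).
  { intros g x. rewrite <- HM, GVl; auto. }
  assert (HR : forall g x, act g (act (inv g) x) = x).
  { intros g x. rewrite <- HM, GVr; auto. }
  destruct HX as [lX [NDX [lenX HXl]]].
  exists (good act X m). split; [|split].
  - intros g u. split.
    + intros [a [Ga ->]]. apply good_orb with (mul := mul) (inv := inv); auto.
    + intros Gu. exists (act (inv g) u). split; [|rewrite HR; auto].
      apply good_orb with (mul := mul) (inv := inv); auto.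
  - intros F HF.
    destruct (step2 mul inv one act HM HL HR H1 Fam Hinv m Hbound X lX HXl Hrep F HF) as [f [Ff Gf]].
    exists f; auto.
  - destruct (card_good mul inv one act HM HL H1 X m (length lX) lX) as [lY [NDY [HY HlY]]]; auto.
    { intros v Hv; apply HXl; auto. }
    { intros v w _ Xw _. apply HXl; auto. }
    exists (length lY). split.
    + exists lY. split; auto. split; auto. intros u. rewrite <- HY. split.
      * intros Gu. split; auto. pose proof Gu as [O [NDO [HO HlO]]].
        assert (HuO : In u O) by (apply HO; exists one; auto).
        destruct (filter (fun v => dec (X v)) O) as [|w l] eqn:Ef.
        { destruct O; simpl in *; [contradiction| lia]. }
        assert (Hw : In w (filter (fun v => dec (X v)) O)) by (rewrite Ef; simpl; auto).
        apply filter_In in Hw as [Hw Xw]. apply decT in Xw. apply HO in Hw as [g ->].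
        exists (act g u). split; [apply HXl; auto|]. exists (inv g). rewrite HL; auto.
      * tauto.
    + rewrite lenX in HlY. lia.
Qed.
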